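(* Let $(A,\dagger)$ be a commutative unital $\mathbb{K}$-algebra with involution, and extend $\dagger$ to $T^+(A)$ letterwise, $(a_1\otimes\cdots\otimes a_n)^\dagger=a_1^\dagger\otimes\cdots\otimes a_n^\dagger$. On $T^+(A)$ define $$X\prec Y:=X\,\bar\bullet^\ell\,P_A(Y),\qquad X\succ Y:=P_A(X)\,\bar\bullet^\ell\,Y,\qquad X\bullet Y:=-X\,\bar\bullet^\ell\,P_A(1_A)\,\bar\bullet^\ell\,Y .$$ Then $(T^+(A),\prec,\succ,\bullet)$ is a commutative tridendriform algebra, and $(X\prec Y)^\dagger=X^\dagger\prec Y^\dagger$ and $(X\bullet Y)^\dagger=X^\dagger\bullet Y^\dagger$ for all $X,Y\in T^+(A)$.
   Context: $\mathbb{K}$ is a field of characteristic $0$; $A$ has product $[a;b]$ and unit $1_A$; an involution is a linear $\dagger$ with $\dagger^2=\mathrm{id}$ and $[a;b]^\dagger=[b^\dagger;a^\dagger]$. $T(A)=\bigoplus_{n\ge0}A^{\otimes n}$, $A^{\otimes0}=\mathbb{K}1_{\mathbb{K}}$, $a\otimes1_{\mathbb{K}}$ identified with $a$. The left-shift shuffle $\bullet^\ell$ is the bilinear product on $T(A)$ with $k1_{\mathbb{K}}\bullet^\ell U=kU=U\bullet^\ell k1_{\mathbb{K}}$ and $(a\otimes U)\bullet^\ell(b\otimes V)=a\otimes(U\bullet^\ell(b\otimes V))+b\otimes((a\otimes U)\bullet^\ell V)-[a;b]\otimes1_A\otimes(U\bullet^\ell V)$ for $a,b\in A$. $T^+(A)=A\otimes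 T(A)$ with $(a\otimes U)\bar\bullet^\ell(b\otimes V)=[a;b]\otimes(U\bullet^\ell V)$, unit $1_A=1_A\otimes1_{\mathbb{K}}$; $P_A(a_1\otimes\cdots\otimes a_n)=1_A\otimes a_1\otimes\cdots\otimes a_n$, so $P_A(1_A)=1_A\otimes1_A$. A tridendriform algebra is a vector space with bilinear $\prec,\succ,\bullet$ such that, with $x\star y:=x\prec y+x\succ y+x\bullet y$: $(x\prec y)\prec z=x\prec(y\star z)$, $(x\succ y)\prec z=x\succ(y\prec z)$, $(x\star y)\succ z=x\succ(y\succ z)$, $(x\succ y)\bullet z=x\succ(y\bullet z)$, $(x\prec y)\bullet z=x\bullet(y\succ z)$, $(x\bullet y)\prec z=x\bullet(y\prec z)$, $(x\bullet y)\bullet z=x\bullet(y\bullet z)$. It is commutative if $x\prec y=y\succ x$ and $x\bullet y=y\bullet x$. *)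

(* Defs.v *)
From HB Require Import structures.
From mathcomp Require Import all_boot all_order all_algebra.
Set Implicit Arguments. Unset Strict Implicit. Unset Printing Implicit Defensive.
Import GRing.Theory.
Local Open Scope ring_scope.

(* Tensor algebra T(A) over the field K, represented by formal K-linear
   combinations of words (finite lists) a_1 ... a_n of elements of A,
   the word [::] standing for 1_K and a word a_1...a_n for a_1 (x) ... (x) a_n.
   Two formal combinations are identified (teq) iff they agree under every
   K-multilinear map into every K-vector space, i.e. iff they are equal in the
   quotient of the free K-module on words by the multilinearity relations,
   which is T(A) = \bigoplus_n A^{(x) n}. *)

Section TensorAlgebra.
Variables (K : fieldType) (A : comAlgType K).

Definition fsum := seq (K * seq A).

Definition multilinear (V : lmodType K) (f : seq A -> V) : Prop :=
  forall (u v : seq A) (k : K) (a b : A),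
    f (u ++ (k *: a + b) :: v) = k *: f (u ++ a :: v) + f (u ++ b :: v).

Definition evalF (V : lmodType K) (f : seq A -> V) (X : fsum) : V :=
  \sum_(p <- X) p.1 *: f p.2.

Definition teq (X Y : fsum) : Prop :=
  forall (V : lmodType K) (f : seq A -> V), multilinear f -> evalF f X = evalF f Y.

Definition scaleF (k : K) (X : fsum) : fsum := [seq (k * p.1, p.2) | p <- X].
Definition consF (a : A) (X : fsum) : fsum := [seq (p.1, a :: p.2) | p <- X].

Fixpoint lsh (U : seq A) : seq A -> fsum :=
  match U with
  | [::] => fun V => [:: (1, V)]
  | a :: U' =>
      fix lshU (V : seq A) : fsum :=
        match V with
        | [::] => [:: (1, a :: U')]
        | b :: V' =>
            consF a (lsh U' V) ++ consF b (lshU V')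
              ++ scaleF (-1) (consF (a * b) (consF 1 (lsh U' V')))
        end
  end.

(* T^+(A) = A (x) T(A): formal combinations of (k, (a, U)) meaning k (a (x) U) *)
Definition tplus := seq (K * (A * seq A)).

Definition toT (X : tplus) : fsum := [seq (p.1, p.2.1 :: p.2.2) | p <- X].

Definition tpeq (X Y : tplus) : Prop := teq (toT X) (toT Y).

Definition tpadd (X Y : tplus) : tplus := X ++ Y.
Definition tpscale (k : K) (X : tplus) : tplus := [seq (k * p.1, p.2) | p <- X].

(* (a (x) U) barbullet (b (x) V) = [a;b] (x) (U bullet^l V), extended bilinearly *)
Definition barmul (X Y : tplus) : tplus :=
  flatten [seq flatten [seq [seq (p.1 * q.1 * r.1, (p.2.1 * q.2.1, r.2))
                             | r <- lsh p.2.2 q.2.2] | q <- Y] | p <- X].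

Definition PA (X : tplus) : tplus := [seq (p.1, (1, p.2.1 :: p.2.2)) | p <- X].

(* 1_A = 1_A (x) 1_K as an element of T^+(A) *)
Definition tpone : tplus := [:: (1, (1, [::]))].

Definition tprec (X Y : tplus) : tplus := barmul X (PA Y).
Definition tsucc (X Y : tplus) : tplus := barmul (PA X) Y.
Definition tdot (X Y : tplus) : tplus :=
  tpscale (-1) (barmul (barmul X (PA tpone)) Y).

Definition tdag (dg : A -> A) (X : tplus) : tplus :=
  [seq (p.1, (dg p.2.1, map dg p.2.2)) | p <- X].

End TensorAlgebra.

Definition is_tridendriform (T : Type) (eqv : T -> T -> Prop) (add : T -> T -> T)
  (pr su bu : T -> T -> T) : Prop :=
  let st x y := add (add (pr x y) (su x y)) (bu x y) in
  forall x y z : T,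
    eqv (pr (pr x y) z) (pr x (st y z)) /\
    eqv (pr (su x y) z) (su x (pr y z)) /\
    eqv (su (st x y) z) (su x (su y z)) /\
    eqv (bu (su x y) z) (su x (bu y z)) /\
    eqv (bu (pr x y) z) (bu x (su y z)) /\
    eqv (pr (bu x y) z) (bu x (pr y z)) /\
    eqv (bu (bu x y) z) (bu x (bu y z)).

Definition is_commutative_trid (T : Type) (eqv : T -> T -> Prop)
  (pr su bu : T -> T -> T) : Prop :=
  forall x y : T, eqv (pr x y) (su y x) /\ eqv (bu x y) (bu y x).

(* Main.v *)
Require Import Defs.
From HB Require Import structures.
From mathcomp Require Import all_boot all_order all_algebra.
Import GRing.Theory.
Local Open Scope ring_scope.
Set Implicit Arguments. Unset Strict Implicit.

Arguments lsh : simpl never.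
Arguments consF : simpl never.
Arguments scaleF : simpl never.
Arguments evalF : simpl never.

Section L1.
Variables (K : fieldType) (A : comAlgType K) (V : lmodType K).
Implicit Types (f g : seq A -> V) (u v w z y x : seq A) (X : @fsum K A).

Lemma evalF_nil f : evalF f [::] = 0.
Proof. by rewrite /evalF big_nil. Qed.
Lemma evalF_cat f X Y : evalF f (X ++ Y) = evalF f X + evalF f Y.
Proof. by rewrite /evalF big_cat. Qed.
Lemma evalF_one f w : evalF f [:: (1, w)] = f w.
Proof. by rewrite /evalF big_seq1 scale1r. Qed.
Lemma evalF_consF f a X : evalF f (consF a X) = evalF (fun w => f (a :: w)) X.
Proof. by rewrite /evalF /consF big_map. Qed.
Lemma evalF_scaleF f k X : evalF f (scaleF k X) = k *: evalF f X.
Proof.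
by rewrite /evalF /scaleF big_map scaler_sumr; apply eq_bigr => p _; rewrite scalerA.
Qed.
Lemma evalF_ext f g X : (forall w, f w = g w) -> evalF f X = evalF g X.
Proof. by move=> e; apply eq_bigr => p _; rewrite e. Qed.
Lemma evalF_add f g X : evalF (fun w => f w + g w) X = evalF f X + evalF g X.
Proof. by rewrite /evalF -big_split; apply eq_bigr => p _; rewrite scalerDr. Qed.
Lemma evalF_opp f X : evalF (fun w => - f w) X = - evalF f X.
Proof. by rewrite /evalF -sumrN; apply eq_bigr => p _; rewrite scalerN. Qed.
Lemma evalF_sub f g X : evalF (fun w => f w - g w) X = evalF f X - evalF g X.
Proof. by rewrite evalF_add evalF_opp. Qed.

Lemma lsh_cons a u b v : lsh (a :: u) (b :: v) =
  consF a (lsh u (b :: v)) ++ consF b (lsh (a :: u) v)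
  ++ scaleF (-1) (consF (a * b) (consF 1 (lsh u v))).
Proof. by []. Qed.
Lemma lsh_nil v : lsh [::] v = [:: (1, v)]. Proof. by []. Qed.
Lemma lsh_nilr u : lsh u [::] = [:: (1, u)]. Proof. by case: u. Qed.

Lemma E_lsh_cons f a u b v : evalF f (lsh (a :: u) (b :: v)) =
  evalF (fun w => f (a :: w)) (lsh u (b :: v))
  + evalF (fun w => f (b :: w)) (lsh (a :: u) v)
  - evalF (fun w => f (a * b :: 1 :: w)) (lsh u v).
Proof.
by rewrite lsh_cons !evalF_cat evalF_scaleF !evalF_consF scaleN1r addrA.
Qed.

Lemma E_one_left f z y :
  evalF f (lsh (1 :: z) y) = evalF (fun w => f (1 :: w)) (lsh z y).
Proof.
elim: y f => [|c y IH] f; first by rewrite !lsh_nilr !evalF_one.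
by rewrite E_lsh_cons IH mul1r addrK.
Qed.

Lemma E_comm f u v : evalF f (lsh u v) = evalF f (lsh v u).
Proof.
elim: u v f => [|a u IHu] v f; first by rewrite lsh_nilr.
elim: v f => [|b v IHv] f; first by rewrite lsh_nilr.
rewrite !E_lsh_cons IHu IHv IHu mulrC; congr (_ - _); exact: addrC.
Qed.

Lemma E_one_right f u z :
  evalF f (lsh u (1 :: z)) = evalF (fun w => f (1 :: w)) (lsh u z).
Proof. by rewrite E_comm E_one_left E_comm. Qed.

Lemma E_lsh_cons_fun f a b (P Q : seq A -> seq A) X :
  evalF (fun s => evalF f (lsh (a :: P s) (b :: Q s))) X =
  evalF (fun s => evalF (fun w => f (a :: w)) (lsh (P s) (b :: Q s))) X
  + evalF (fun s => evalF (fun w => f (b :: w)) (lsh (a :: P s) (Q s))) X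
  - evalF (fun s => evalF (fun w => f (a * b :: 1 :: w)) (lsh (P s) (Q s))) X.
Proof.
rewrite -evalF_add -evalF_sub; apply: evalF_ext => s; exact: E_lsh_cons.
Qed.

Lemma E_one_left_fun f y X :
  evalF (fun s => evalF f (lsh (1 :: s) y)) X =
  evalF (fun s => evalF (fun w => f (1 :: w)) (lsh s y)) X.
Proof. by apply: evalF_ext => s; rewrite E_one_left. Qed.
Lemma E_one_right_fun f y X :
  evalF (fun s => evalF f (lsh y (1 :: s))) X =
  evalF (fun s => evalF (fun w => f (1 :: w)) (lsh y s)) X.
Proof. by apply: evalF_ext => s; rewrite E_one_right. Qed.

Definition A3 f u v w := evalF (fun s => evalF f (lsh s w)) (lsh u v).
Definition B3 f u v w := evalF (fun t => evalF f (lsh u t)) (lsh v w).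

Lemma A3_cons f a u b v c w : A3 f (a :: u) (b :: v) (c :: w) =
  A3 (fun s => f (a :: s)) u (b :: v) (c :: w)
  + A3 (fun s => f (c :: s)) (a :: u) (b :: v) w
  - A3 (fun s => f (a * c :: 1 :: s)) u (b :: v) w
  + A3 (fun s => f (b :: s)) (a :: u) v (c :: w)
  - A3 (fun s => f (b * c :: 1 :: s)) (a :: u) v w
  - A3 (fun s => f (a * b :: 1 :: s)) u v (c :: w)
  + A3 (fun s => f (a * b * c :: 1 :: 1 :: s)) u v w.
Proof.
rewrite {1}/A3 E_lsh_cons.
rewrite (E_lsh_cons_fun _ _ _ (fun s => s) (fun _ => w)).
rewrite (E_lsh_cons_fun _ _ _ (fun s => s) (fun _ => w)).
rewrite (E_lsh_cons_fun _ _ _ (fun s => 1 :: s) (fun _ => w)).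
rewrite !E_one_left_fun.
rewrite /A3 [in RHS]E_lsh_cons.
rewrite !opprD !opprK !addrA.
by rewrite [LHS](ACl (1*2*5*8*3*4*6*7*9)).
Qed.

Lemma B3_cons f a u b v c w : B3 f (a :: u) (b :: v) (c :: w) =
  B3 (fun s => f (a :: s)) u (b :: v) (c :: w)
  + B3 (fun s => f (b :: s)) (a :: u) v (c :: w)
  + B3 (fun s => f (c :: s)) (a :: u) (b :: v) w
  - B3 (fun s => f (a * b :: 1 :: s)) u v (c :: w)
  - B3 (fun s => f (a * c :: 1 :: s)) u (b :: v) w
  - B3 (fun s => f (b * c :: 1 :: s)) (a :: u) v w
  + B3 (fun s => f (a * (b * c) :: 1 :: 1 :: s)) u v w.
Proof.
rewrite {1}/B3 E_lsh_cons.
rewrite (E_lsh_cons_fun _ _ _ (fun _ => u) (fun s => s)).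
rewrite (E_lsh_cons_fun _ _ _ (fun _ => u) (fun s => s)).
rewrite (E_lsh_cons_fun _ _ _ (fun _ => u) (fun s => 1 :: s)).
rewrite !E_one_right_fun.
rewrite /B3 [in RHS]E_lsh_cons.
rewrite !opprD !opprK !addrA.
by rewrite [LHS](ACl (1*4*7*2*5*3*6*8*9)).
Qed.

From mathcomp Require Import zify.
Lemma assoc3_aux n f u v w : (size u + size v + size w < n)%N -> A3 f u v w = B3 f u v w.
Proof.
elim: n f u v w => [|n IH] f u v w //.
case: u => [|a u] Hs.
  rewrite /A3 /B3 lsh_nil evalF_one; apply: evalF_ext => t.
  by rewrite lsh_nil evalF_one.
case: v Hs => [|b v] Hs.
  by rewrite /A3 /B3 lsh_nilr lsh_nil !evalF_one.
case: w Hs => [|c w] Hs.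
  rewrite /A3 /B3 lsh_nilr evalF_one; apply: evalF_ext => t.
  by rewrite lsh_nilr evalF_one.
rewrite A3_cons B3_cons !IH; try (simpl in *; lia).
rewrite [in RHS]mulrA.
by rewrite [LHS](ACl (1*4*2*6*3*5*7)).
Qed.

Lemma E_assoc f u v w :
  evalF (fun s => evalF f (lsh s w)) (lsh u v) =
  evalF (fun t => evalF f (lsh u t)) (lsh v w).
Proof. exact: (@assoc3_aux (size u + size v + size w).+1). Qed.
End L1.
Section L2.
Variables (K : fieldType) (A : comAlgType K) (V : lmodType K).
Implicit Types (X Y Z : @tplus K A) (g H : A * seq A -> V).

Definition evalP g X : V := \sum_(p <- X) p.1 *: g p.2.
Arguments evalP : simpl never.

Lemma evalP_cat g X Y : evalP g (tpadd X Y) = evalP g X + evalP g Y.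
Proof. by rewrite /evalP /tpadd big_cat. Qed.
Lemma evalP_ext g1 g2 X : (forall p, g1 p = g2 p) -> evalP g1 X = evalP g2 X.
Proof. by move=> e; apply eq_bigr => p _; rewrite e. Qed.
Lemma evalP_add g1 g2 X : evalP (fun p => g1 p + g2 p) X = evalP g1 X + evalP g2 X.
Proof. by rewrite /evalP -big_split; apply eq_bigr => p _; rewrite scalerDr. Qed.
Lemma evalP_opp g X : evalP (fun p => - g p) X = - evalP g X.
Proof. by rewrite /evalP -sumrN; apply eq_bigr => p _; rewrite scalerN. Qed.
Lemma evalP_sub g1 g2 X : evalP (fun p => g1 p - g2 p) X = evalP g1 X - evalP g2 X.
Proof. by rewrite evalP_add evalP_opp. Qed.
Lemma evalP_tpscale g k X : evalP g (tpscale k X) = k *: evalP g X.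
Proof.
by rewrite /evalP /tpscale big_map scaler_sumr; apply eq_bigr => p _; rewrite scalerA.
Qed.
Lemma evalP_PA g X : evalP g (PA X) = evalP (fun p => g (1, p.1 :: p.2)) X.
Proof. by rewrite /evalP /PA big_map. Qed.
Lemma evalP_tpone g : evalP g (@tpone K A) = g (1, [::]).
Proof. by rewrite /evalP /tpone big_seq1 scale1r. Qed.
Lemma evalP_tdag dg g X :
  evalP g (tdag dg X) = evalP (fun p => g (dg p.1, map dg p.2)) X.
Proof. by rewrite /evalP /tdag big_map. Qed.
Lemma evalF_toT (f : seq A -> V) X :
  evalF f (toT X) = evalP (fun p => f (p.1 :: p.2)) X.
Proof. by rewrite /evalF /evalP /toT big_map. Qed.

Lemma evalP_barmul g X Y : evalP g (barmul X Y) =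
  evalP (fun x => evalP (fun y => evalF (fun w => g (x.1 * y.1, w)) (lsh x.2 y.2)) Y) X.
Proof.
rewrite /evalP /barmul big_flatten big_map; apply eq_bigr => p _.
rewrite big_flatten big_map scaler_sumr; apply eq_bigr => q _.
rewrite big_map /evalF !scaler_sumr; apply eq_bigr => r _.
by rewrite !scalerA.
Qed.

Lemma evalP_swap (F : A * seq A -> A * seq A -> V) X Y :
  evalP (fun x => evalP (fun y => F x y) Y) X =
  evalP (fun y => evalP (fun x => F x y) X) Y.
Proof.
rewrite /evalP.
under eq_bigr => x _ do rewrite scaler_sumr.
rewrite exchange_big /=; apply eq_bigr => y _.
rewrite scaler_sumr; apply eq_bigr => x _.
by rewrite !scalerA mulrC.
Qed.

Lemma evalF_evalP_swap (F : seq A -> A * seq A -> V) (W : @fsum K A) Z :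
  evalF (fun w => evalP (fun z => F w z) Z) W =
  evalP (fun z => evalF (fun w => F w z) W) Z.
Proof.
rewrite /evalP /evalF.
under eq_bigr => x _ do rewrite scaler_sumr.
rewrite exchange_big /=; apply eq_bigr => y _.
rewrite scaler_sumr; apply eq_bigr => x _.
by rewrite !scalerA mulrC.
Qed.


Lemma E_D (h : seq A -> V) x y :
  evalF (fun s => evalF h (lsh s y)) (lsh x [:: 1]) =
  evalF (fun w => h (1 :: w)) (lsh x y).
Proof. by rewrite E_comm E_one_left lsh_nil evalF_one E_one_left. Qed.

Lemma prec_ev H X Y : evalP H (tprec X Y) =
  evalP (fun x => evalP (fun y => evalF (fun w => H (x.1, w)) (lsh x.2 (y.1 :: y.2))) Y) X.
Proof.
rewrite /tprec evalP_barmul; apply: evalP_ext => x; rewrite evalP_PA.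
by apply: evalP_ext => y /=; rewrite mulr1.
Qed.

Lemma succ_ev H X Y : evalP H (tsucc X Y) =
  evalP (fun x => evalP (fun y => evalF (fun w => H (y.1, w)) (lsh (x.1 :: x.2) y.2)) Y) X.
Proof.
rewrite /tsucc evalP_barmul evalP_PA; apply: evalP_ext => x.
by apply: evalP_ext => y /=; rewrite mul1r.
Qed.

Lemma dot_ev H X Y : evalP H (tdot X Y) =
  - evalP (fun x => evalP (fun y => evalF (fun w => H (x.1 * y.1, 1 :: w)) (lsh x.2 y.2)) Y) X.
Proof.
rewrite /tdot evalP_tpscale scaleN1r evalP_barmul evalP_barmul; congr (- _).
apply: evalP_ext => x; rewrite evalP_PA evalP_tpone /= evalF_evalP_swap.
apply: evalP_ext => y; by rewrite mulr1 E_D.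
Qed.

Lemma st_ev H (k : seq A -> V) Y Z : (forall h t, k (h :: t) = H (h, t)) ->
  evalP H (tpadd (tpadd (tprec Y Z) (tsucc Y Z)) (tdot Y Z)) =
  evalP (fun y => evalP (fun z => evalF k (lsh (y.1 :: y.2) (z.1 :: z.2))) Z) Y.
Proof.
move=> hk; rewrite !evalP_cat prec_ev succ_ev dot_ev.
rewrite -evalP_opp -!evalP_add; apply: evalP_ext => y.
rewrite -evalP_opp -!evalP_add; apply: evalP_ext => z.
rewrite E_lsh_cons; congr (_ + _ - _); apply: evalF_ext => w; by rewrite hk.
Qed.

Notation stt Y Z := (tpadd (tpadd (tprec Y Z) (tsucc Y Z)) (tdot Y Z)).

Lemma ax1 g X Y Z : evalP g (tprec (tprec X Y) Z) = evalP g (tprec X (stt Y Z)).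
Proof.
rewrite prec_ev prec_ev [RHS]prec_ev /=; apply: evalP_ext => x.
rewrite (@st_ev _ (fun t => evalF (fun w => g (x.1, w)) (lsh x.2 t))) //.
apply: evalP_ext => y; rewrite evalF_evalP_swap; apply: evalP_ext => z.
exact: E_assoc.
Qed.

Lemma ax2 g X Y Z : evalP g (tprec (tsucc X Y) Z) = evalP g (tsucc X (tprec Y Z)).
Proof.
rewrite prec_ev succ_ev [RHS]succ_ev /=; apply: evalP_ext => x.
rewrite prec_ev /=; apply: evalP_ext => y; rewrite evalF_evalP_swap.
apply: evalP_ext => z /=; exact: E_assoc.
Qed.

Lemma ax3 g X Y Z : evalP g (tsucc (stt X Y) Z) = evalP g (tsucc X (tsucc Y Z)).
Proof.
rewrite succ_ev (@st_ev _ (fun t => evalP (fun z => evalF (fun w => g (z.1, w)) (lsh t z.2)) Z)) //.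
rewrite [RHS]succ_ev; apply: evalP_ext => x; rewrite succ_ev; apply: evalP_ext => y.
rewrite evalF_evalP_swap; apply: evalP_ext => z /=; exact: E_assoc.
Qed.

Lemma ax4 g X Y Z : evalP g (tdot (tsucc X Y) Z) = evalP g (tsucc X (tdot Y Z)).
Proof.
rewrite dot_ev succ_ev [RHS]succ_ev; apply: esym.
under evalP_ext => x do rewrite dot_ev.
rewrite evalP_opp; congr (- _); apply: evalP_ext => x; apply: evalP_ext => y.
rewrite [RHS]evalF_evalP_swap; apply: evalP_ext => z.
by rewrite /= E_one_right_fun E_assoc.
Qed.

Lemma ax5 g X Y Z : evalP g (tdot (tprec X Y) Z) = evalP g (tdot X (tsucc Y Z)).
Proof.
rewrite dot_ev prec_ev [RHS]dot_ev; congr (- _); apply: evalP_ext => x.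
rewrite succ_ev; apply: evalP_ext => y; rewrite evalF_evalP_swap.
apply: evalP_ext => z /=; exact: E_assoc.
Qed.

Lemma ax6 g X Y Z : evalP g (tprec (tdot X Y) Z) = evalP g (tdot X (tprec Y Z)).
Proof.
rewrite prec_ev dot_ev [RHS]dot_ev; congr (- _); apply: evalP_ext => x.
rewrite prec_ev; apply: evalP_ext => y; rewrite evalF_evalP_swap.
apply: evalP_ext => z /=; by rewrite E_one_left_fun E_assoc.
Qed.

Lemma ax7 g X Y Z : evalP g (tdot (tdot X Y) Z) = evalP g (tdot X (tdot Y Z)).
Proof.
rewrite dot_ev dot_ev [RHS]dot_ev; congr (- _); apply: esym.
under evalP_ext => x do rewrite dot_ev.
rewrite evalP_opp; congr (- _); apply: evalP_ext => x; apply: evalP_ext => y.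
rewrite [RHS]evalF_evalP_swap; apply: evalP_ext => z.
by rewrite /= E_one_right_fun E_one_left_fun E_assoc mulrA.
Qed.

Lemma cm1 g X Y : evalP g (tprec X Y) = evalP g (tsucc Y X).
Proof.
rewrite prec_ev succ_ev [RHS]evalP_swap; apply: evalP_ext => x.
apply: evalP_ext => y; exact: E_comm.
Qed.

Lemma cm2 g X Y : evalP g (tdot X Y) = evalP g (tdot Y X).
Proof.
rewrite !dot_ev; congr (- _); rewrite [RHS]evalP_swap; apply: evalP_ext => x.
apply: evalP_ext => y; by rewrite E_comm (mulrC x.1).
Qed.

Section Dag.
Variables (dg : A -> A) (dg1 : dg 1 = 1) (dgM : forall a b, dg (a * b) = dg a * dg b).

Lemma lsh_map u v : lsh (map dg u) (map dg v) = [seq (p.1, map dg p.2) | p <- lsh u v].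
Proof.
elim: u v => [|a u IHu] v; first by rewrite /= !lsh_nil.
elim: v => [|b v IHv]; first by rewrite /= !lsh_nilr.
rewrite /= !lsh_cons (IHu (b :: v)) IHv IHu /consF /scaleF !map_cat -!map_comp.
congr (_ ++ _ ++ _); apply: eq_map => p //=; by rewrite dgM dg1.
Qed.

Lemma E_map (f : seq A -> V) u v :
  evalF f (lsh (map dg u) (map dg v)) = evalF (fun w => f (map dg w)) (lsh u v).
Proof. by rewrite lsh_map /evalF big_map. Qed.

Lemma dag1 g X Y : evalP g (tdag dg (tprec X Y)) = evalP g (tprec (tdag dg X) (tdag dg Y)).
Proof.
rewrite evalP_tdag prec_ev [RHS]prec_ev evalP_tdag; apply: evalP_ext => x.
rewrite evalP_tdag; apply: evalP_ext => y /=.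
exact: (esym (E_map (fun w => g (dg x.1, w)) x.2 (y.1 :: y.2))).
Qed.

Lemma dag2 g X Y : evalP g (tdag dg (tdot X Y)) = evalP g (tdot (tdag dg X) (tdag dg Y)).
Proof.
rewrite evalP_tdag dot_ev [RHS]dot_ev evalP_tdag; congr (- _); apply: evalP_ext => x.
rewrite evalP_tdag; apply: evalP_ext => y /=.
rewrite E_map; apply: evalF_ext => w /=; by rewrite dgM dg1.
Qed.
End Dag.

End L2.

Lemma tpeq_of (K : fieldType) (A : comAlgType K) (X Y : @tplus K A) :
  (forall (V : lmodType K) (g : A * seq A -> V), evalP g X = evalP g Y) -> tpeq X Y.
Proof. by move=> h W f _; rewrite !evalF_toT. Qed.

Unset Implicit Arguments.
Theorem corollary4p10 (K : fieldType) (A : comAlgType K) (dg : A -> A)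
  (charK0 : [pchar K] =i pred0)
  (dg_lin : forall (k : K) (a b : A), dg (k *: a + b) = k *: dg a + dg b)
  (dg_inv : forall a : A, dg (dg a) = a)
  (dg_anti : forall a b : A, dg (a * b) = dg b * dg a) :
  [/\ is_tridendriform (@tpeq K A) (@tpadd K A)
        (@tprec K A) (@tsucc K A) (@tdot K A),
      is_commutative_trid (@tpeq K A) (@tprec K A) (@tsucc K A) (@tdot K A),
      (forall X Y : @tplus K A,
          tpeq (tdag dg (tprec X Y)) (tprec (tdag dg X) (tdag dg Y))) &
      (forall X Y : @tplus K A,
          tpeq (tdag dg (tdot X Y)) (tdot (tdag dg X) (tdag dg Y)))].
Proof.
have dgM : forall a b, dg (a * b) = dg a * dg b by move=> a b; rewrite dg_anti mulrC.
have dg1 : dg 1 = 1.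
  have := dg_anti (dg 1) 1; rewrite mulr1 !dg_inv mulr1 => h; exact: esym h.
split.
- hnf => X Y Z.
  by split; [|split; [|split; [|split; [|split; [|split]]]]]; apply: tpeq_of => W g;
    [exact: ax1|exact: ax2|exact: ax3|exact: ax4|exact: ax5|exact: ax6|exact: ax7].
- by move=> X Y; split; apply: tpeq_of => W g; [exact: cm1|exact: cm2].
- by move=> X Y; apply: tpeq_of => W g; exact: dag1.
- by move=> X Y; apply: tpeq_of => W g; exact: dag2.
Qed.
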